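(* Every $\mathcal{L}$-definable subset $A$ of $K^{n}$ with an accumulation point $a\in K^{n}$ has, after a permutation of the coordinates, an $\mathcal{L}$-definable $x_{1}$-fiber shrinking at $a$.
   Context: Standing assumptions: $K$ is a Henselian valued field of equicharacteristic zero whose valuation $v:K\to\Gamma\cup\{\infty\}$ has rank one ($\Gamma\subset(\mathbb{R},+)$), with the topology of its absolute value; $\mathcal{L}$ is the three-sorted Denef–Pas language (sorts $K$, $\Gamma$, $\Bbbk$; maps $v$ and an angular component map $\overline{ac}:K\to\Bbbk$, multiplicative, $\overline{ac}(0)=0$, equal to the residue map on units of the valuation ring); definable means definable with parameters. Definition: let $A\subset K^{n}$ be $\mathcal{L}$-definable with accumulation point $a=(a_{1},\ldots,a_{n})$, and let $E\subset K$ be $\mathcal{L}$-definable with accumulation point $a_{1}$. An $\mathcal{L}$-definable family $\Phi=\bigcup_{t\in E}\{t\}\times\Phi_{t}\subset A$ (with $\Phi_t\subset K^{n-1}$) is an $\mathcal{L}$-definable $x_{1}$-fiber shrinking for $A$ at $a$ if for every neighbourhood $U$ of $(a_{2},\ldots,a_{n})$ in $K^{n-1}$ there is a neighbourhood $V$ of $a_{1}$ in $K$ with $\emptyset\neq\Phi_{t}\subset U$ for every $t\in V\cap E$, $t\neq a_{1}$. (For $n=1$, $A$ itself is an $x_1$-fiber shrinking.) *)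

(* Defs.v *)
From Stdlib Require Import Reals.
From HB Require Import structures.
From mathcomp Require Import all_boot all_order all_algebra all_fingroup.
Set Implicit Arguments. Unset Strict Implicit. Unset Printing Implicit Defensive.
Import GRing.Theory.
Local Open Scope ring_scope.

(** * Gamma u {oo} as [option R]  (None = oo) *)
Definition Gadd (a b : option R) : option R :=
  match a, b with Some x, Some y => Some (Rplus x y) | _, _ => None end.
Definition Glt (a b : option R) : Prop :=
  match a, b with
  | Some x, Some y => Rlt x y
  | Some _, None => True
  | None, _ => False
  end.
Definition Gle (a b : option R) : Prop := Glt a b \/ a = b.

(** * Henselian, equicharacteristic zero, rank one valued field with an
      angular component map (the structure interpreting the Denef-Pas
      language).  [v : K -> Gamma u {oo}] with Gamma a subgroup of (R,+);
      [res] is the residue map of the valuation ring onto the residue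
      field [k] (its values outside the valuation ring are irrelevant);
      [ac] is the angular component map. *)
Record DPField (K k : fieldType) (v : K -> option R) (res ac : K -> k) : Prop := {
  val_inf : forall x, v x = None <-> x = 0;
  val_mul : forall x y, v (x * y) = Gadd (v x) (v y);
  val_add : forall x y, Gle (v x) (v (x + y)) \/ Gle (v y) (v (x + y));
  (* rank one: the value group is a nontrivial subgroup of R *)
  val_nontriv : exists x, v x <> None /\ v x <> Some R0;
  res_add : forall x y, Gle (Some R0) (v x) -> Gle (Some R0) (v y) ->
              res (x + y) = res x + res y;
  res_mul : forall x y, Gle (Some R0) (v x) -> Gle (Some R0) (v y) ->
              res (x * y) = res x * res y;
  res_one : res 1 = 1;
  res_ker : forall x, Gle (Some R0) (v x) -> (res x = 0 <-> Glt (Some R0) (v x));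
  res_surj : forall c : k, exists x, Gle (Some R0) (v x) /\ res x = c;
  charK0 : forall m : nat, (m.+1)%:R != 0 :> K;
  chark0 : forall m : nat, (m.+1)%:R != 0 :> k;
  henselian : forall (p : {poly K}) (a : K),
      p \is monic -> (forall i, Gle (Some R0) (v p`_i)) ->
      Gle (Some R0) (v a) -> Glt (Some R0) (v p.[a]) ->
      v (p^`()).[a] = Some R0 ->
      exists b, Gle (Some R0) (v b) /\ p.[b] = 0 /\ Glt (Some R0) (v (b - a));
  ac_mul : forall x y, ac (x * y) = ac x * ac y;
  ac_zero : ac 0 = 0;
  ac_unit : forall x, v x = Some R0 -> ac x = res x
}.

Section Lang.
Variables (K k : fieldType).

Inductive termK : Type :=
  | KVar of nat | KPar of K | KAdd of termK & termK | KMul of termK & termK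
  | KNeg of termK.

(* value-group sort terms (sort Gamma u {oo}); parameters of this sort are
   the values [GVal (KPar c)] *)
Inductive termG : Type :=
  | GVar of nat | GVal of termK | GAdd of termG & termG.

Inductive termk : Type :=
  | kVar of nat | kPar of k | kAc of termK | kAdd of termk & termk
  | kMul of termk & termk | kNeg of termk.

Inductive formula : Type :=
  | FEqK of termK & termK
  | FEqG of termG & termG
  | FLtG of termG & termG
  | FEqk of termk & termk
  | FNot of formula
  | FAnd of formula & formula
  | FExK of nat & formula
  | FExG of nat & formula
  | FExk of nat & formula.

Variables (v : K -> option R) (ac : K -> k).

Fixpoint evalK (eK : nat -> K) (t : termK) : K :=
  match t with
  | KVar i => eK i
  | KPar c => c
  | KAdd t1 t2 => evalK eK t1 + evalK eK t2
  | KMul t1 t2 => evalK eK t1 * evalK eK t2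
  | KNeg t1 => - evalK eK t1
  end.

Fixpoint evalG (eK : nat -> K) (eG : nat -> option R) (t : termG) : option R :=
  match t with
  | GVar i => eG i
  | GVal s => v (evalK eK s)
  | GAdd t1 t2 => Gadd (evalG eK eG t1) (evalG eK eG t2)
  end.

Fixpoint evalk (eK : nat -> K) (ek : nat -> k) (t : termk) : k :=
  match t with
  | kVar i => ek i
  | kPar c => c
  | kAc s => ac (evalK eK s)
  | kAdd t1 t2 => evalk eK ek t1 + evalk eK ek t2
  | kMul t1 t2 => evalk eK ek t1 * evalk eK ek t2
  | kNeg t1 => - evalk eK ek t1
  end.

Definition upd {T : Type} (e : nat -> T) (i : nat) (x : T) : nat -> T :=
  fun j => if j == i then x else e j.

Fixpoint sat (eK : nat -> K) (eG : nat -> option R) (ek : nat -> k)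
    (f : formula) : Prop :=
  match f with
  | FEqK t1 t2 => evalK eK t1 = evalK eK t2
  | FEqG t1 t2 => evalG eK eG t1 = evalG eK eG t2
  | FLtG t1 t2 => Glt (evalG eK eG t1) (evalG eK eG t2)
  | FEqk t1 t2 => evalk eK ek t1 = evalk eK ek t2
  | FNot g => ~ sat eK eG ek g
  | FAnd g h => sat eK eG ek g /\ sat eK eG ek h
  | FExK i g => exists x : K, sat (upd eK i x) eG ek g
  (* the Gamma u {oo} sort is the image of v *)
  | FExG i g => exists x : K, sat eK (upd eG i (v x)) ek g
  | FExk i g => exists c : k, sat eK eG (upd ek i c) g
  end.

(* a point of K^n as an environment: variable i < n is x_i; the remaining
   variables are set to the (definable) constants 0, oo, 0 *)
Definition env_of (n : nat) (x : 'I_n -> K) : nat -> K :=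
  fun i => match (insub i : option 'I_n) with Some j => x j | None => 0 end.

Definition definable (n : nat) (A : ('I_n -> K) -> Prop) : Prop :=
  exists f : formula, forall x : 'I_n -> K,
    A x <-> sat (env_of x) (fun _ => None) (fun _ => 0) f.

(** topology of the absolute value |x| = exp(-v x) on K^n (max norm) *)
Definition ball (n : nat) (p : 'I_n -> K) (r : R) (y : 'I_n -> K) : Prop :=
  forall i, Glt (Some r) (v (y i - p i)).

Definition nbhd (n : nat) (p : 'I_n -> K) (U : ('I_n -> K) -> Prop) : Prop :=
  exists r : R, forall y, ball p r y -> U y.

Definition accumulation (n : nat) (A : ('I_n -> K) -> Prop) (a : 'I_n -> K) : Prop :=
  forall U, nbhd a U -> exists x, A x /\ x <> a /\ U x.

Definition pt1 (t : K) : 'I_1 -> K := fun _ => t.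

Definition tail (m : nat) (x : 'I_m.+1 -> K) : 'I_m -> K :=
  fun i => x (lift ord0 i).

(** An L-definable x_1-fiber shrinking for A at a: a definable E <= K with
    accumulation point a_1 and a definable Phi <= A lying over E
    (Phi = U_{t in E} {t} x Phi_t, Phi_t = {tail x | x in Phi, x_1 = t}),
    such that for every neighbourhood U of (a_2..a_n) there is a
    neighbourhood V of a_1 with  {} <> Phi_t <= U  for t in V n E, t <> a_1. *)
Definition fiber_shrinking (m : nat) (A : ('I_m.+1 -> K) -> Prop)
    (a : 'I_m.+1 -> K) (E : K -> Prop) (Phi : ('I_m.+1 -> K) -> Prop) : Prop :=
  definable (fun y : 'I_1 -> K => E (y ord0)) /\
  accumulation (fun y : 'I_1 -> K => E (y ord0)) (pt1 (a ord0)) /\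
  definable Phi /\
  (forall x, Phi x -> A x) /\
  (forall x, Phi x -> E (x ord0)) /\
  (forall U, nbhd (tail a) U ->
     exists V, nbhd (pt1 (a ord0)) V /\
       forall t, V (pt1 t) -> E t -> t <> a ord0 ->
         (exists x, Phi x /\ x ord0 = t) /\
         (forall x, Phi x -> x ord0 = t -> U (tail x))).

End Lang.

(* Main.v *)
Require Import Defs.
From Stdlib Require Import Reals.
From HB Require Import structures.
From mathcomp Require Import all_boot all_order all_algebra all_fingroup.
From Stdlib Require Import Classical FunctionalExtensionality Lra ClassicalEpsilon.
Import GRing.Theory.

Section Helpers.
Variables (K k : fieldType) (v : K -> option R) (ac : K -> k).
Local Open Scope ring_scope.

Fixpoint renK (p : nat -> nat) (t : termK K) : termK K :=
  match t with
  | KVar i => KVar K (p i)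
  | KPar c => KPar c
  | KAdd a b => KAdd (renK p a) (renK p b)
  | KMul a b => KMul (renK p a) (renK p b)
  | KNeg a => KNeg (renK p a)
  end.

Fixpoint renG (p : nat -> nat) (t : termG K) : termG K :=
  match t with
  | GVar i => GVar K i
  | GVal s => GVal (renK p s)
  | GAdd a b => GAdd (renG p a) (renG p b)
  end.

Fixpoint renk (p : nat -> nat) (t : termk K k) : termk K k :=
  match t with
  | kVar i => kVar K k i
  | kPar c => kPar K c
  | kAc s => kAc k (renK p s)
  | kAdd a b => kAdd (renk p a) (renk p b)
  | kMul a b => kMul (renk p a) (renk p b)
  | kNeg a => kNeg (renk p a)
  end.

Fixpoint renF (p : nat -> nat) (f : formula K k) : formula K k :=
  match f with
  | FEqK a b => FEqK k (renK p a) (renK p b)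
  | FEqG a b => FEqG k (renG p a) (renG p b)
  | FLtG a b => FLtG k (renG p a) (renG p b)
  | FEqk a b => FEqk (renk p a) (renk p b)
  | FNot g => FNot (renF p g)
  | FAnd g h => FAnd (renF p g) (renF p h)
  | FExK i g => FExK (p i) (renF p g)
  | FExG i g => FExG i (renF p g)
  | FExk i g => FExk i (renF p g)
  end.

Lemma evalK_ren p eK t : evalK eK (renK p t) = evalK (eK \o p) t.
Proof. by elim: t => //= [a -> b ->|a -> b ->|a ->]. Qed.

Lemma evalG_ren p eK eG t : evalG v eK eG (renG p t) = evalG v (eK \o p) eG t.
Proof. by elim: t => //= [s|a -> b ->]; rewrite ?evalK_ren. Qed.

Lemma evalk_ren p eK ek t : evalk ac eK ek (renk p t) = evalk ac (eK \o p) ek t.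
Proof. by elim: t => //= [s|a -> b ->|a -> b ->|a ->]; rewrite ?evalK_ren. Qed.

Lemma sat_ren p (pinj : injective p) f : forall eK eG ek,
  sat v ac eK eG ek (renF p f) <-> sat v ac (eK \o p) eG ek f.
Proof.
elim: f => [a b|a b|a b|a b|g IH|g IHg h IHh|i g IH|i g IH|i g IH] eK eG ek /=.
- by rewrite !evalK_ren.
- by rewrite !evalG_ren.
- by rewrite !evalG_ren.
- by rewrite !evalk_ren.
- by rewrite IH.
- by rewrite IHg IHh.
- split=> [[x Hx]|[x Hx]]; exists x; move: Hx; rewrite IH;
  suff -> : (upd eK (p i) x \o p) = upd (eK \o p) i x by [].
  + by apply: functional_extensionality => j; rewrite /upd /= (inj_eq pinj).
  + by apply: functional_extensionality => j; rewrite /upd /= (inj_eq pinj).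
- split=> [[x Hx]|[x Hx]]; exists x; move: Hx; by rewrite IH.
- split=> [[x Hx]|[x Hx]]; exists x; move: Hx; by rewrite IH.
Qed.

Lemma sat_exK (l : seq nat) g : forall eK eG ek,
  sat v ac eK eG ek (foldr (@FExK K k) g l) <->
  exists w : nat -> K, sat v ac (fun j => if j \in l then w j else eK j) eG ek g.
Proof.
elim: l => [|i l IH] eK eG ek /=.
  split=> [H|[w H]]; first by exists (fun _ => 0).
  by move: H; congr (sat _ _ _ _ _ _); apply: functional_extensionality.
split=> [[x /IH [w Hw]]|[w Hw]].
  exists (fun j => if j \in l then w j else x); move: Hw.
  congr (sat _ _ _ _ _ _); apply: functional_extensionality => j.
  rewrite inE /upd; case: (j \in l); first by rewrite orbT.
  by rewrite orbF; case: (j == i).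
exists (w i); apply/IH; exists w; move: Hw.
congr (sat _ _ _ _ _ _); apply: functional_extensionality => j.
rewrite inE /upd; case: (j \in l); first by rewrite orbT.
by rewrite orbF; case: eqP => [->|].
Qed.

Lemma env_of_val m (x : 'I_m -> K) (j : 'I_m) : env_of x (val j) = x j.
Proof. by rewrite /env_of valK. Qed.

Lemma env_of_ge m (x : 'I_m -> K) i : (m <= i)%N -> env_of x i = 0.
Proof. by move=> H; rewrite /env_of insubF // ltnNge H. Qed.

Lemma Gle_refl a : Gle a a.
Proof. by right. Qed.

Lemma Gle_total a b : Gle a b \/ Gle b a.
Proof.
case: a => [x|]; case: b => [y|]; rewrite /Gle /Glt; auto.
case: (total_order_T x y) => [[H|->]|H]; auto.
Qed.

Lemma Glt_Gle_trans a b c : Glt a b -> Gle b c -> Glt a c.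
Proof.
move=> H [H'|<-] //; move: H H'; case: a => [x|]; case: b => [y|];
  case: c => [z|] //=; lra.
Qed.

Lemma Gle_trans a b c : Gle a b -> Gle b c -> Gle a c.
Proof.
move=> [H|<-] // H'; left; exact: Glt_Gle_trans H H'.
Qed.

Lemma Glt_mono (r r' : R) z : Rle r' r -> Glt (Some r) z -> Glt (Some r') z.
Proof. by case: z => [w|] //= ? ?; lra. Qed.

Lemma argmin_seq (T : eqType) (f : T -> option R) (l : seq T) x0 :
  x0 \in l -> exists2 j, j \in l & forall i, i \in l -> Gle (f j) (f i).
Proof.
elim: l x0 => [//|i l IH] x0 _.
case: (boolP (size l == 0)%N) => [/nilP ->|].
  by exists i; rewrite ?inE // => i'; rewrite inE => /eqP ->; apply: Gle_refl.
case: l IH => [//|i1 l] IH _.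
have [j jl Hj] := IH i1 (mem_head _ _).
case: (Gle_total (f i) (f j)) => H.
  exists i; first exact: mem_head.
  move=> i'; rewrite inE => /orP [/eqP ->|/Hj]; [exact: Gle_refl|exact: Gle_trans].
exists j; first by rewrite inE jl orbT.
by move=> i'; rewrite inE => /orP [/eqP ->|/Hj].
Qed.

Lemma argmin_ord m (f : 'I_m.+1 -> option R) :
  exists j, forall i, Gle (f j) (f i).
Proof.
have [j _ Hj] := @argmin_seq _ f _ _ (mem_ord_enum (@ord0 m)).
by exists j => i; apply: Hj; apply: mem_ord_enum.
Qed.


Fixpoint condF (c : nat -> formula K k) (m : nat) : formula K k :=
  match m with
  | O => FEqK k (KPar 0) (KPar 0)
  | S m' => FAnd (condF c m') (c m')
  end.

Lemma sat_condF c m eK eG ek :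
  sat v ac eK eG ek (condF c m) <-> forall i, (i < m)%N -> sat v ac eK eG ek (c i).
Proof.
elim: m => [|m IH] /=; first by split.
rewrite IH; split=> [[H1 H2] i|H]; last first.
  by split; [move=> i Hi; apply: H; rewrite ltnS ltnW|apply: H].
rewrite ltnS leq_eqVlt => /orP [/eqP ->//|]; exact: H1.
Qed.

Definition leF (e : nat -> K) (i : nat) : formula K k :=
  let g0 := GVal (KAdd (KVar K 0) (KNeg (KPar (e 0%N)))) in
  let gi := GVal (KAdd (KVar K i) (KNeg (KPar (e i)))) in
  FNot (FAnd (FNot (FLtG k g0 gi)) (FNot (FEqG k g0 gi))).

Lemma sat_leF e i eK eG ek :
  sat v ac eK eG ek (leF e i) <-> Gle (v (eK 0%N - e 0%N)) (v (eK i - e i)).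
Proof.
rewrite /leF /= /Gle; split.
  by move=> H; apply: NNPP => H'; apply: H; split => ?; apply: H'; auto.
by move=> [H|H] [H1 H2].
Qed.

Lemma pigeon m (A : ('I_m.+1 -> K) -> Prop) a :
  accumulation v A a -> exists j, forall r, exists x, A x /\ x <> a /\
    ball v a r x /\ forall i, Gle (v (x j - a j)) (v (x i - a i)).
Proof.
move=> Hacc; apply: NNPP => Hno.
pose P j r := exists x, A x /\ x <> a /\
    ball v a r x /\ forall i, Gle (v (x j - a j)) (v (x i - a i)).
have Hmono j r r' : Rle r r' -> ~ P j r -> ~ P j r'.
  move=> Hr HP [x [Ax [xa [Hb Hm]]]]; apply: HP; exists x; do !split => //.
  by move=> i; apply: Glt_mono Hr (Hb i).
have Hl (l : seq 'I_m.+1) : exists R0, forall j, j \in l -> ~ P j R0.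
  elim: l => [|j l [R1 H1]]; first by exists R0.
  have [rj Hrj] : exists rj, ~ P j rj.
    apply: NNPP => H; apply: Hno; exists j => r; apply: NNPP => H'.
    by apply: H; exists r.
  exists (Rmax rj R1) => j'; rewrite inE => /orP [/eqP ->|/H1].
    exact: Hmono (Rmax_l _ _) Hrj.
  exact: Hmono (Rmax_r _ _).
have [R1 H1] := Hl (ord_enum m.+1).
have [x [Ax [xa Hb]]] := Hacc (ball v a R1) (ex_intro _ R1 (fun y H => H)).
have [j Hj] := @argmin_ord _ (fun i => v (x i - a i)).
by apply: (H1 j (mem_ord_enum _)); exists x.
Qed.

End Helpers.

Definition piT (j i : nat) : nat := if i == 0%N then j else if i == j then 0%N else i.

Lemma piTK j : involutive (piT j).
Proof.
move=> i; rewrite /piT.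
case: (eqVneq i 0%N) => [->|Hi].
  by rewrite eqxx; case: (eqVneq j 0%N).
case: (eqVneq i j) => [->|Hij]; first by rewrite eqxx; case: (eqVneq j 0%N).
by rewrite (negbTE Hi) (negbTE Hij).
Qed.

Lemma piT_ord m (J : 'I_m.+1) (o : 'I_m.+1) :
  piT J (val o) = val (tperm ord0 J o).
Proof.
rewrite /piT; case: tpermP => [->|->|H1 H2] //=.
  by case: (eqVneq (val J) 0%N) => [->|_]; rewrite ?eqxx.
have -> : (val o == 0%N) = false.
  by apply/negbTE/eqP => H; apply: H1; apply: val_inj.
have -> : (val o == val J) = false.
  by apply/negbTE/eqP => H; apply: H2; apply: val_inj.
by [].
Qed.

Lemma env_piT (K : fieldType) m (J : 'I_m.+1) (y : 'I_m.+1 -> K) :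
  env_of y \o piT J = env_of (fun i => y (tperm ord0 J i)).
Proof.
apply: functional_extensionality => i /=.
case: (ltnP i m.+1) => Hi.
  have -> : i = val (Ordinal Hi) by [].
  by rewrite piT_ord !env_of_val.
have -> : piT J i = i.
  rewrite /piT; have -> : (i == 0%N) = false by case: i Hi.
  have -> : (i == J) = false.
    apply/negbTE; apply/eqP => E; move: (ltn_ord J); rewrite -E ltnNge Hi.
    by [].
  by [].
by rewrite !env_of_ge.
Qed.

Lemma sat_And (K k : fieldType) v ac eK eG ek (g h : formula K k) :
  sat v ac eK eG ek (FAnd g h) <-> sat v ac eK eG ek g /\ sat v ac eK eG ek h.
Proof. by []. Qed.

Lemma env_split (K : fieldType) m (y : 'I_1 -> K) (y' : 'I_m.+1 -> K) (w : nat -> K) :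
  y' ord0 = y ord0 -> (forall i : 'I_m.+1, val i != 0%N -> y' i = w i) ->
  (fun j => if j \in iota 1 m then w j else env_of y j) = env_of y'.
Proof.
move=> H0 Hw; apply: functional_extensionality => j.
rewrite mem_iota; case: j => [|j] /=.
  have h1 := env_of_val _ _ y ord0; have h2 := env_of_val _ _ y' ord0.
  by rewrite /= in h1 h2; rewrite h1 h2 H0.
case: (ltnP j m) => Hj.
  rewrite add1n ltnS Hj /=.
  have -> : j.+1 = val (Ordinal (n:=m.+1) (m:=j.+1) Hj) by [].
  by rewrite env_of_val Hw.
rewrite add1n ltnS ltnNge Hj /= !env_of_ge //.
Qed.

Theorem proposition6p1 (K k : fieldType) (v : K -> option R) (res ac : K -> k)
  (HK : DPField v res ac) (n : nat)
  (A : ('I_n.+1 -> K) -> Prop) (a : 'I_n.+1 -> K) :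
  definable v ac A -> accumulation v A a ->
  exists s : {perm 'I_n.+1},
    exists (E : K -> Prop) (Phi : ('I_n.+1 -> K) -> Prop),
      fiber_shrinking v ac
        (fun y : 'I_n.+1 -> K => A (fun i => y ((s^-1)%g i)))
        (fun i => a (s i)) E Phi.
Proof.
move=> [f Hf] Hacc.
have [J HJ] := pigeon _ _ _ _ _ Hacc.
exists (tperm ord0 J); rewrite tpermV.
set s := tperm ord0 J.
have sK : forall i, s (s i) = i by move=> i; rewrite /s tpermK.
have s0 : s ord0 = J by rewrite /s tpermL.
pose Phi := fun y : 'I_n.+1 -> K => A (fun i => y (s i)) /\
  forall i, Gle (v (y ord0 - a (s ord0))%R) (v (y i - a (s i))%R).
exists (fun t => exists y, Phi y /\ y ord0 = t), Phi.
have HPhi : definable v ac Phi.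
  exists (FAnd (renF _ _ (piT J) f) (condF _ _ (leF _ _ (env_of (fun i => a (s i)))) n.+1)) => y; rewrite sat_And.
  rewrite (sat_ren _ _ _ _ _ (can_inj (piTK J))).
  rewrite env_piT -Hf sat_condF.
  split => [[HA Hle]|[HA Hle]]; split => //.
    move=> i Hi; apply/sat_leF.
    have -> : i = val (Ordinal Hi) by [].
    have -> : 0%N = val (@ord0 n) by [].
    by rewrite !env_of_val; apply: Hle.
  move=> i; move: (Hle (val i) (ltn_ord i)) => /sat_leF.
  have -> : 0%N = val (@ord0 n) by [].
  by rewrite !env_of_val.
split.
  exists (foldr (@FExK K k) (projT1 (constructive_indefinite_description _ HPhi)) (iota 1 n)).
  move=> y; case: (constructive_indefinite_description _ HPhi) => g Hg /=.
  rewrite sat_exK; split.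
    move=> [y' [Py' Hy']]; exists (env_of y').
    rewrite (env_split _ _ _ _ _ Hy'); first by apply/Hg.
    by move=> i _; rewrite env_of_val.
  move=> [w Hw].
  pose y' := fun i : 'I_n.+1 => if val i == 0%N then y ord0 else w i.
  exists y'; split; last by rewrite /y' eqxx.
  apply/Hg; rewrite -(env_split _ _ y y' w) //.
  by move=> i /negbTE Hi; rewrite /y' Hi.
split.
  move=> U [r Hr].
  have [x [Ax [xa [Hb Hm]]]] := HJ r.
  exists (pt1 (x J)); split; last split.
  - exists (fun i => x (s i)); split; last by rewrite /= s0.
    split.
      by have -> : (fun i => x (s (s i))) = x by apply: functional_extensionality => i; rewrite sK.
    by move=> i; rewrite s0; apply: Hm.
  - move=> /(congr1 (fun g => g ord0)); rewrite /pt1 => Hx; apply: xa.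
    apply: functional_extensionality => i.
    have Hn : v (x J - a (s ord0))%R = None by apply/(val_inf HK); rewrite Hx subrr.
    rewrite s0 in Hn; move: (Hm i); rewrite Hn => [[//|/esym/(val_inf HK)/eqP]].
    by rewrite subr_eq0 => /eqP.
  - by apply: Hr => i; rewrite /= s0; apply: Hb.
split; first exact: HPhi.
split; first by move=> x [].
split; first by move=> x Px; exists x.
move=> U [r Hr].
exists (ball v (pt1 (a (s ord0))) r); split; first by exists r.
move=> t Vt [y' [Py' Hy]] ht; split; first by exists y'.
move=> x [Ax Hle] Hx0; apply: Hr => i; rewrite /tail.
apply: Glt_Gle_trans (Hle (lift ord0 i)).
rewrite Hx0; exact (Vt ord0).
Qed.
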